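(* Consider the controlled SI optimal control problem described in the context, with one control per node ($M=N$), given (fixed) initial conditions, and quadratic costs $g_j(u)=c_ju^2$ with $c_j>0$ for $1\le j\le N$. Let $(\boldsymbol i^*(t), \boldsymbol\lambda^*(t), \boldsymbol u^*(t))$, $t\in[0,T]$, be an optimal state trajectory, its associated adjoint trajectory, and optimal controls satisfying the Pontryagin Maximum Principle conditions listed in the context. Then each optimal control $u_j^*(t)$, $1\le j\le N$, is a convex function of $t$ on $[0,T]$.
   Context: Let $N\geq 1$, and let $\boldsymbol A=(A_{jk})$ be an $N\times N$ symmetric matrix with entries in $\{0,1\}$ (adjacency matrix of an undirected, unweighted network on nodes $1,\dots,N$). Fix $\beta>0$, a horizon $T>0$, and initial values $x_{0j}\in[0,1]$. Each node $j$ has its own control $u_j(t)$. The state $i_j(t)\in[0,1]$ (probability node $j$ is informed), with $s_j(t)=1-i_j(t)$, evolves by $\dot i_j(t)=\beta s_j(t)\sum_{k=1}^N A_{jk}i_k(t)+u_j(t)s_j(t)$, $i_j(0)=x_{0j}$, $1\le j\le N$. The objective to be maximized is $J=\frac1N\sum_{j=1}^N i_j(T)-\sum_{j=1}^N\int_0^T g_j(u_j(t))\,dt$. The optimal controls are nonnegative: $u_j^*(t)\ge 0$. The Hamiltonian is $H(\boldsymbol i,\boldsymbol\lambda,\boldsymbol u)=-\sum_{j=1}^N g_j(u_j)+\sum_{l=1}^N\lambda_l\big(\beta s_l\sum_{k=1}^N A_{lk}i_k+u_l s_l\big)$ with $s_l=1-i_l$. The Pontryagin conditions are: $\boldsymbol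 i^*$ solves the state equations above; the adjoint variables satisfy $\dot\lambda_j^*(t)=-\beta\sum_{l=1}^N\lambda_l^*(t)s_l^*(t)A_{lj}+\beta\lambda_j^*(t)\sum_{k=1}^N A_{jk}i_k^*(t)+\lambda_j^*(t)u_j^*(t)$ with $\lambda_j^*(T)=1/N$; and for each $t$, $\boldsymbol u^*(t)$ maximizes $H(\boldsymbol i^*(t),\boldsymbol\lambda^*(t),\cdot)$, which gives $g_j'(u_j^*(t))=\lambda_j^*(t)s_j^*(t)$ for each $j$. *)

(* Defs.v *)
From Stdlib Require Import Reals.
From Coquelicot Require Import Coquelicot.
Open Scope R_scope.

(* fsum N f = f 0 + f 1 + ... + f (N-1): nodes 1..N of the paper are indexed 0..N-1. *)
Fixpoint fsum (N : nat) (f : nat -> R) : R :=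
  match N with
  | O => 0
  | S n => fsum n f + f n
  end.

Definition cont_on_interval (f : R -> R) (a b : R) : Prop :=
  forall t, a <= t <= b ->
    filterlim f (within (fun x => a <= x <= b) (locally t)) (locally (f t)).

Definition convex_on (f : R -> R) (a b : R) : Prop :=
  forall x y theta, a <= x <= b -> a <= y <= b -> 0 <= theta <= 1 ->
    f (theta * x + (1 - theta) * y) <= theta * f x + (1 - theta) * f y.

(* Main.v *)
Require Import Defs.
From Stdlib Require Import Reals Lra Lia.
From Coquelicot Require Import Coquelicot.
Open Scope R_scope.

Lemma der_val (f : R -> R) (t l l' : R) : is_derive f t l -> l = l' -> is_derive f t l'.
Proof. intros H ->; exact H. Qed.

Lemma der_mult (f g : R -> R) t a b : is_derive f t a -> is_derive g t b ->
  is_derive (fun x => f x * g x) t (a * g t + f t * b).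
Proof. intros Hf Hg. exact (is_derive_mult f g t a b Hf Hg Rmult_comm). Qed.

Lemma der_1m (f : R -> R) t a : is_derive f t a -> is_derive (fun x => 1 - f x) t (- a).
Proof. intros Hf. pose proof (is_derive_minus (fun _ => 1) f t 0 a (is_derive_const 1 t) Hf) as H.
 eapply der_val; [exact H|]. change (0 + - a = - a). ring. Qed.

Lemma der_scal (f : R -> R) t a k : is_derive f t a -> is_derive (fun x => f x * k) t (a * k).
Proof. intros Hf. pose proof (is_derive_mult f (fun _ => k) t a 0 Hf (is_derive_const k t) Rmult_comm) as H.
 eapply der_val; [exact H|]. change (a * k + f t * 0 = a * k). ring. Qed.

Lemma fsum_nonneg N f : (forall k, (k < N)%nat -> 0 <= f k) -> 0 <= fsum N f.
Proof.
  induction N as [|N IH]; intros H; simpl; [lra|].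
  assert (0 <= fsum N f) by (apply IH; intros; apply H; lia).
  assert (0 <= f N) by (apply H; lia). lra.
Qed.

Lemma fsum_mono N f g : (forall k, (k < N)%nat -> f k <= g k) -> fsum N f <= fsum N g.
Proof.
  induction N as [|N IH]; intros H; simpl; [lra|].
  assert (fsum N f <= fsum N g) by (apply IH; intros; apply H; lia).
  assert (f N <= g N) by (apply H; lia). lra.
Qed.

Lemma MVT_open (f df : R -> R) a b : a < b ->
  (forall c, a < c < b -> is_derive f c (df c)) ->
  (forall c, a <= c <= b -> continuity_pt f c) ->
  exists c, a < c < b /\ f b - f a = df c * (b - a).
Proof.
  intros Hab Hd Hc.
  destruct (MVT f id a b (fun c P => ex_derive_Reals_0 f c (ex_intro _ _ (Hd c P)))
     (fun c _ => derivable_pt_id c) Hab Hc (fun c _ => derivable_continuous_pt _ _ (derivable_pt_id c)))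
     as [c0 [P E]].
  exists c0. split; [exact P|].
  rewrite derive_pt_id in E.
  rewrite (derive_pt_eq_0 _ _ (df c0)) in E.
  - unfold id in E. lra.
  - apply is_derive_Reals. apply Hd. exact P.
Qed.

Lemma cont_of_der (f : R -> R) t l : is_derive f t l -> continuity_pt f t.
Proof.
  intro H. apply continuity_pt_filterlim. apply (ex_derive_continuous (K:=R_AbsRing) (V:=R_NormedModule)). exists l. exact H.
Qed.

Lemma dec_from_deriv (f df : R -> R) a b :
  (forall t, a < t < b -> is_derive f t (df t)) ->
  (forall t, a < t < b -> df t <= 0) ->
  forall s t, a < s -> s <= t -> t < b -> f t <= f s.
Proof.
  intros Hd Hn s t Hs Hst Ht.
  destruct (Req_dec s t) as [->|Hne]; [lra|].
  destruct (MVT_open f df s t) as [c0 [Hc Heq]]; try lra.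
  - intros x Hx. apply Hd. lra.
  - intros x Hx. apply (cont_of_der f x (df x)). apply Hd. lra.
  - assert (df c0 <= 0) by (apply Hn; lra). nra.
Qed.

Lemma convex_from_deriv (g D : R -> R) a b :
  (forall t, continuity_pt g t) -> (forall t, a < t < b -> is_derive g t (D t)) ->
  (forall s t, a < s -> s <= t -> t < b -> D s <= D t) ->
  forall x y theta, a <= x <= b -> a <= y <= b -> 0 <= theta <= 1 ->
    g (theta * x + (1 - theta) * y) <= theta * g x + (1 - theta) * g y.
Proof.
  intros Hc Hd Hm.
  assert (key : forall x y theta, a <= x <= b -> a <= y <= b -> 0 < theta < 1 -> x < y ->
    g (theta * x + (1 - theta) * y) <= theta * g x + (1 - theta) * g y).
  { intros x y th Hx Hy Hth Hxy.
    set (z := th * x + (1 - th) * y).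
    assert (x < z < y) by (unfold z; nra).
    destruct (MVT_open g D x z) as [c1 [Hc1 E1]]; try lra.
    { intros w Hw. apply Hd. lra. }
    { intros w _. apply Hc. }
    destruct (MVT_open g D z y) as [c2 [Hc2 E2]]; try lra.
    { intros w Hw. apply Hd. lra. }
    { intros w _. apply Hc. }
    assert (D c1 <= D c2) by (apply Hm; lra).
    assert (Ez1 : z - x = (1 - th) * (y - x)) by (unfold z; ring).
    assert (Ez2 : y - z = th * (y - x)) by (unfold z; ring).
    rewrite Ez1 in E1. rewrite Ez2 in E2.
    assert (0 <= th * (1 - th) * (y - x) * (D c2 - D c1)).
    { apply Rmult_le_pos; [|lra]. apply Rmult_le_pos; [|lra]. nra. }
    nra. }
  intros x y th Hx Hy Hth.
  destruct (Req_dec th 0) as [->|H0].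
  { replace (0 * x + (1 - 0) * y) with y by ring. lra. }
  destruct (Req_dec th 1) as [->|H1].
  { replace (1 * x + (1 - 1) * y) with x by ring. lra. }
  destruct (Rtotal_order x y) as [Hl|[->|Hg]].
  - apply key; lra.
  - replace (th * y + (1 - th) * y) with y by ring. lra.
  - replace (th * x + (1 - th) * y) with ((1 - th) * y + (1 - (1 - th)) * x) by ring.
    replace (th * g x + (1 - th) * g y) with ((1 - th) * g y + (1 - (1 - th)) * g x) by ring.
    apply key; lra.
Qed.

Definition cl (T t : R) := Rmax 0 (Rmin T t).

Lemma cl_in T t : 0 <= T -> 0 <= cl T t <= T.
Proof. intros. unfold cl, Rmax, Rmin. repeat destruct Rle_dec; lra. Qed.

Lemma cl_id T t : 0 <= t <= T -> cl T t = t.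
Proof. intros. unfold cl, Rmax, Rmin. repeat destruct Rle_dec; lra. Qed.

Lemma cl_lip T x y : 0 <= T -> Rabs (cl T x - cl T y) <= Rabs (x - y).
Proof. intros. unfold cl, Rmax, Rmin.
  repeat destruct Rle_dec; unfold Rabs; repeat destruct Rcase_abs; lra. Qed.

Lemma cont_cl (f : R -> R) T : 0 <= T -> cont_on_interval f 0 T ->
  forall t, continuous (fun x => f (cl T x)) t.
Proof.
  intros HT Hf t. unfold continuous.
  eapply filterlim_comp; [|apply (Hf (cl T t) (cl_in T t HT))].
  intros Q [eps He]. exists eps. intros y Hy. apply He; [|apply cl_in; exact HT].
  unfold ball in *; simpl in *; unfold AbsRing_ball, abs, minus, plus, opp in *; simpl in *.
  pose proof (cl_lip T y t HT). unfold Rminus in H. lra.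
Qed.

Theorem theorem2
  (N : nat) (HN : (1 <= N)%nat)
  (A : nat -> nat -> R)
  (HA01 : forall j k, (j < N)%nat -> (k < N)%nat -> A j k = 0 \/ A j k = 1)
  (HAsym : forall j k, (j < N)%nat -> (k < N)%nat -> A j k = A k j)
  (beta T : R) (Hbeta : 0 < beta) (HT : 0 < T)
  (x0 : nat -> R) (Hx0 : forall j, (j < N)%nat -> 0 <= x0 j <= 1)
  (c : nat -> R) (Hc : forall j, (j < N)%nat -> 0 < c j)
  (i lam u : nat -> R -> R)
  (* states take values in [0,1] *)
  (Hi01 : forall j t, (j < N)%nat -> 0 <= t <= T -> 0 <= i j t <= 1)
  (* optimal controls are nonnegative *)
  (Hu0 : forall j t, (j < N)%nat -> 0 <= t <= T -> 0 <= u j t)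
  (* state equations *)
  (Hicont : forall j, (j < N)%nat -> cont_on_interval (i j) 0 T)
  (Hinit : forall j, (j < N)%nat -> i j 0 = x0 j)
  (Hstate : forall j t, (j < N)%nat -> 0 < t < T ->
     is_derive (i j) t
       (beta * (1 - i j t) * fsum N (fun k => A j k * i k t)
        + u j t * (1 - i j t)))
  (* adjoint equations *)
  (Hlcont : forall j, (j < N)%nat -> cont_on_interval (lam j) 0 T)
  (Hterm : forall j, (j < N)%nat -> lam j T = 1 / INR N)
  (Hadj : forall j t, (j < N)%nat -> 0 < t < T ->
     is_derive (lam j) t
       (- beta * fsum N (fun l => lam l t * (1 - i l t) * A l j)
        + beta * lam j t * fsum N (fun k => A j k * i k t)
        + lam j t * u j t))
  (* maximum condition: derivative of g_j at u_j equals lambda_j s_j, g_j(u) = c_j u^2 *)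
  (Hmax : forall j t, (j < N)%nat -> 0 <= t <= T ->
     2 * c j * u j t = lam j t * (1 - i j t)) :
  forall j, (j < N)%nat -> convex_on (u j) 0 T.
Proof.
  intros j Hj.
  set (wd := fun l t => - beta * (1 - i l t) * fsum N (fun m => lam m t * (1 - i m t) * A m l)).
  assert (Hw : forall l t, (l < N)%nat -> 0 < t < T ->
     is_derive (fun t => lam l t * (1 - i l t)) t (wd l t)).
  { intros l t Hl Ht. eapply der_val.
    - apply der_mult; [apply Hadj; auto | apply der_1m; apply Hstate; auto].
    - unfold wd. ring. }
  assert (Hwpos : forall m t, (m < N)%nat -> 0 <= t <= T -> 0 <= lam m t * (1 - i m t)).
  { intros m t Hm Ht. rewrite <- Hmax by auto.
    pose proof (Hc m Hm). pose proof (Hu0 m t Hm Ht). nra. }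
  assert (HAnn : forall l m, (l < N)%nat -> (m < N)%nat -> 0 <= A l m).
  { intros l m Hl Hm. destruct (HA01 l m Hl Hm) as [-> | ->]; lra. }
  assert (Hwdec : forall l s t, (l < N)%nat -> 0 < s -> s <= t -> t < T ->
     lam l t * (1 - i l t) <= lam l s * (1 - i l s)).
  { intros l s t Hl. apply (dec_from_deriv (fun t => lam l t * (1 - i l t)) (wd l) 0 T).
    - intros; apply Hw; auto.
    - intros t0 Ht0. unfold wd.
      assert (0 <= fsum N (fun m => lam m t0 * (1 - i m t0) * A m l)).
      { apply fsum_nonneg. intros m Hm. apply Rmult_le_pos; [apply Hwpos; auto; lra|auto]. }
      pose proof (Hi01 l t0 Hl ltac:(lra)).
      assert (0 <= beta * (1 - i l t0)) by nra. nra. }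
  assert (Hsdec : forall s t, 0 < s -> s <= t -> t < T -> 1 - i j t <= 1 - i j s).
  { apply (dec_from_deriv (fun t => 1 - i j t)
      (fun t => - (beta * (1 - i j t) * fsum N (fun k => A j k * i k t) + u j t * (1 - i j t))) 0 T).
    - intros t Ht. apply der_1m. apply Hstate; auto.
    - intros t Ht.
      assert (0 <= fsum N (fun k => A j k * i k t)).
      { apply fsum_nonneg. intros k Hk. apply Rmult_le_pos; [auto|]. apply (Hi01 k t Hk); lra. }
      pose proof (Hi01 j t Hj ltac:(lra)). pose proof (Hu0 j t Hj ltac:(lra)).
      assert (0 <= beta * (1 - i j t)) by nra. nra. }
  pose proof (Hc j Hj) as Hcj.
  set (k := / (2 * c j)).
  assert (Hk : 0 < k) by (unfold k; apply Rinv_0_lt_compat; lra).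
  set (g := fun t => lam j (cl T t) * (1 - i j (cl T t)) * k).
  assert (Hug : forall t, 0 <= t <= T -> u j t = g t).
  { intros t Ht. unfold g. rewrite cl_id by exact Ht. rewrite <- Hmax by auto.
    unfold k. field. lra. }
  set (D := fun t => wd j t * k).
  intros x y th Hx Hy Hth.
  assert (Hz : 0 <= th * x + (1 - th) * y <= T) by nra.
  rewrite (Hug x Hx), (Hug y Hy), (Hug _ Hz).
  apply (convex_from_deriv g D 0 T); auto.
  - intro t. apply continuity_pt_filterlim. unfold g.
    apply (continuous_mult (fun t => lam j (cl T t) * (1 - i j (cl T t))) (fun _ => k)).
    + apply (continuous_mult (fun t => lam j (cl T t)) (fun t => 1 - i j (cl T t))).
      * apply cont_cl; [lra|auto].
      * apply (continuous_minus (fun _ => 1) (fun t => i j (cl T t))).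
        -- apply continuous_const.
        -- apply cont_cl; [lra|auto].
    + apply continuous_const.
  - intros t Ht. unfold D, g.
    apply (is_derive_ext_loc (fun t => lam j t * (1 - i j t) * k)).
    + assert (Hpos : 0 < Rmin t (T - t)) by (apply Rmin_glb_lt; lra).
      exists (mkposreal _ Hpos). intros y0 Hy0.
      unfold ball in Hy0; simpl in Hy0; unfold AbsRing_ball, abs, minus, plus, opp in Hy0; simpl in Hy0.
      pose proof (Rmin_l t (T - t)). pose proof (Rmin_r t (T - t)).
      apply Rabs_lt_between in Hy0.
      rewrite cl_id by lra. reflexivity.
    + apply der_scal. apply Hw; auto.
  - intros s t Hs Hst Ht. unfold D, wd.
    set (S := fun t => fsum N (fun m => lam m t * (1 - i m t) * A m j)).
    change (- beta * (1 - i j s) * S s * k <= - beta * (1 - i j t) * S t * k).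
    assert (HS : S t <= S s).
    { unfold S. apply fsum_mono. intros m Hm.
      apply Rmult_le_compat_r; [auto|]. apply Hwdec; auto. }
    assert (HS0 : 0 <= S t).
    { unfold S. apply fsum_nonneg. intros m Hm. apply Rmult_le_pos; [apply Hwpos; auto; lra|auto]. }
    pose proof (Hsdec s t Hs Hst Ht).
    pose proof (Hi01 j t Hj ltac:(lra)).
    assert ((1 - i j t) * S t <= (1 - i j s) * S s) by nra.
    assert (0 < beta * k) by nra.
    nra.
Qed.
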